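(* Let $\mathcal{U}\subseteq\mathcal{E}$ be any dead-ending universe. Then $\mathcal{D}(\mathcal{U}\cap\mathcal{L})=\mathcal{U}$.
   Context: Games are finite partizan games. A universe is a set of games closed under options, disjunctive sums, conjugates (swapping roles of Left and Right), and forming $\{\mathscr{G}^L\mid\mathscr{G}^R\}$ from nonempty finite subsets of it. $\mathcal{D}(\mathcal{A})$ denotes the smallest universe containing $\mathcal{A}$. A Left (Right) end has no Left (Right) option; a Left (Right) dead-end is a game all of whose subpositions are Left (Right) ends; $\mathcal{L}$ is the set of Left dead-ends. $\mathcal{E}$ is the set of games every end-subposition of which is a (Left or Right) dead-end; a universe contained in $\mathcal{E}$ is dead-ending. *)

(* Defs.v *)
From Stdlib Require Import List.
Import ListNotations.

(* A game form {G^L | G^R}; finiteness is built into the inductive type. *)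
Inductive game : Type := Game : list game -> list game -> game.

Definition leftopts (G : game) : list game := let 'Game l _ := G in l.
Definition rightopts (G : game) : list game := let 'Game _ r := G in r.

(* Identity of game forms: the option *sets* coincide (up to identity),
   so order and repetition in the option lists are irrelevant. *)
Inductive ident : game -> game -> Prop :=
| ident_intro gl gr hl hr :
    (forall g, In g gl -> exists h, In h hl /\ ident g h) ->
    (forall h, In h hl -> exists g, In g gl /\ ident g h) ->
    (forall g, In g gr -> exists h, In h hr /\ ident g h) ->
    (forall h, In h hr -> exists g, In g gr /\ ident g h) ->
    ident (Game gl gr) (Game hl hr).

Fixpoint conj (G : game) : game :=
  match G with Game l r => Game (map conj r) (map conj l) end.

Fixpoint add (G : game) : game -> game :=
  fix add_aux (H : game) : game :=
    match G, H with
    | Game gl gr, Game hl hr =>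
        Game (map (fun g => add g H) gl ++ map add_aux hl)
             (map (fun g => add g H) gr ++ map add_aux hr)
    end.

Inductive subpos : game -> game -> Prop :=
| sp_refl G : subpos G G
| sp_left gl gr g H : In g gl -> subpos H g -> subpos H (Game gl gr)
| sp_right gl gr g H : In g gr -> subpos H g -> subpos H (Game gl gr).

Definition left_end (G : game) : Prop := leftopts G = [].
Definition right_end (G : game) : Prop := rightopts G = [].

Definition left_dead_end (G : game) : Prop :=
  forall H, subpos H G -> left_end H.
Definition right_dead_end (G : game) : Prop :=
  forall H, subpos H G -> right_end H.

Definition gset := game -> Prop.

Definition Lset : gset := left_dead_end.

Definition Eset : gset := fun G =>
  forall H, subpos H G -> (left_end H \/ right_end H) ->
    (left_dead_end H \/ right_dead_end H).

Record universe (U : gset) : Prop := {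
  univ_ident : forall G H, U G -> ident G H -> U H;
  univ_left_opt : forall G g, U G -> In g (leftopts G) -> U g;
  univ_right_opt : forall G g, U G -> In g (rightopts G) -> U g;
  univ_add : forall G H, U G -> U H -> U (add G H);
  univ_conj : forall G, U G -> U (conj G);
  univ_form : forall l r, l <> [] -> r <> [] ->
    (forall g, In g l -> U g) -> (forall g, In g r -> U g) -> U (Game l r)
}.

Definition Dgen (A : gset) : gset := fun G =>
  forall V, universe V -> (forall H, A H -> V H) -> V G.

(* Main.v *)
Require Import Defs.
From Stdlib Require Import List.
Import ListNotations.

Section Ind.
Variable P : game -> Prop.
Hypothesis HP : forall l r, (forall g, In g l -> P g) -> (forall g, In g r -> P g) -> P (Game l r).
Fixpoint game_ind2 (G : game) : P G :=
  match G with
  | Game l r => HP l r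
      ((fix f (s : list game) : forall g, In g s -> P g :=
         match s with
         | [] => fun g H => False_ind _ H
         | x :: s' => fun g H => match H with
                     | or_introl e => eq_ind x P (game_ind2 x) g e
                     | or_intror H' => f s' g H' end
         end) l)
      ((fix f (s : list game) : forall g, In g s -> P g :=
         match s with
         | [] => fun g H => False_ind _ H
         | x :: s' => fun g H => match H with
                     | or_introl e => eq_ind x P (game_ind2 x) g e
                     | or_intror H' => f s' g H' end
         end) r)
  end.
End Ind.

Lemma ldead_char l r : left_dead_end (Game l r) <-> l = [] /\ forall g, In g r -> left_dead_end g.
Proof.
  split.
  - intros H. split.
    + apply (H _ (sp_refl _)).
    + intros g Hg K HK. apply H. eapply sp_right; eauto.
  - intros [-> Hr] K HK. inversion HK; subst.
    + reflexivity.
    + contradiction.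
    + eapply Hr; eauto.
Qed.

Lemma rdead_char l r : right_dead_end (Game l r) <-> r = [] /\ forall g, In g l -> right_dead_end g.
Proof.
  split.
  - intros H. split.
    + apply (H _ (sp_refl _)).
    + intros g Hg K HK. apply H. eapply sp_left; eauto.
  - intros [-> Hr] K HK. inversion HK; subst.
    + reflexivity.
    + eapply Hr; eauto.
    + contradiction.
Qed.

Lemma conj_rde : forall G, right_dead_end G -> left_dead_end (conj G).
Proof.
  apply (game_ind2 (fun G => right_dead_end G -> left_dead_end (conj G))). intros l r IHl IHr H.
  apply rdead_char in H. destruct H as [-> Hl]. simpl.
  apply ldead_char. split; [reflexivity|].
  intros g Hg. apply in_map_iff in Hg. destruct Hg as [x [<- Hx]].
  apply IHl; auto.
Qed.

Lemma conj_conj : forall G, conj (conj G) = G.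
Proof.
  apply (game_ind2 (fun G => conj (conj G) = G)). intros l r IHl IHr. simpl.
  rewrite !map_map. f_equal.
  - rewrite <- (map_id l) at 2. apply map_ext_in. auto.
  - rewrite <- (map_id r) at 2. apply map_ext_in. auto.
Qed.

Theorem mainTheorem10 (U : gset) :
  universe U -> (forall G, U G -> Eset G) ->
  forall G, Dgen (fun H => U H /\ Lset H) G <-> U G.
Proof.
  intros HU HE G. split.
  - intros HD. apply HD; [exact HU|]. intros H [H1 _]; exact H1.
  - intros HG V HV HA. revert HG. revert G.
    apply (game_ind2 (fun G => U G -> V G)).
    intros l r IHl IHr HG.
    destruct l as [|a l'].
    + destruct (HE _ HG _ (sp_refl _) (or_introl eq_refl)) as [Hd|Hd].
      * apply HA. split; auto.
      * apply rdead_char in Hd. destruct Hd as [-> _].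
        apply HA. split; auto. apply ldead_char. split; auto. intros g [].
    + destruct r as [|b r'].
      * destruct (HE _ HG _ (sp_refl _) (or_intror eq_refl)) as [Hd|Hd].
        -- apply ldead_char in Hd. destruct Hd as [Hd _]. discriminate.
        -- rewrite <- conj_conj. apply (univ_conj V HV).
           apply HA. split.
           ++ apply (univ_conj U HU); auto.
           ++ apply conj_rde; auto.
      * apply (univ_form V HV); try discriminate.
        -- intros g Hg. apply IHl; auto. apply (univ_left_opt U HU _ _ HG Hg).
        -- intros g Hg. apply IHr; auto. apply (univ_right_opt U HU _ _ HG Hg).
Qed.
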